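(* Let $\mathcal{G}$ be an undirected graph on $n$ nodes with (symmetric) adjacency matrix $\boldsymbol{A}\in\mathbb{R}^{n\times n}$, and let $d\ge 1$. Let $s\le \min\{n,d\}-1$ and let $\epsilon_1>\epsilon_2>\cdots>\epsilon_s>0$ be $s$ distinct positive numbers. Let $\boldsymbol{H}\in\mathbb{R}^{n\times d}$ be a solution of the optimization problem $$\boldsymbol{H}=\arg\min_{\boldsymbol{X}\in\mathbb{R}^{n\times d}} E_{\mathcal{G}}(\boldsymbol{X})\quad\text{subject to}\quad \sigma_k(\boldsymbol{X})\ge \epsilon_k \ \text{ for all } k\in\{1,\dots,s\}.$$ Then for every $k\in\{1,\dots,s\}$, the $k$-th principal component of $\boldsymbol{H}$ is $\boldsymbol{z}^{(k+1)}$.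
   Context: For $\boldsymbol{X}\in\mathbb{R}^{n\times d}$ with rows $\boldsymbol{x}_1,\dots,\boldsymbol{x}_n\in\mathbb{R}^d$ (row $i$ assigned to node $i$), the Dirichlet energy is $E_{\mathcal{G}}(\boldsymbol{X})=\sum_{i,j}\boldsymbol{A}_{i,j}\|\boldsymbol{x}_i-\boldsymbol{x}_j\|^2$; for a vector $\boldsymbol{x}\in\mathbb{R}^n$ this is $E_{\mathcal{G}}(\boldsymbol{x})=\sum_{i,j}\boldsymbol{A}_{i,j}(x_i-x_j)^2$. $\sigma_k(\boldsymbol{X})$ denotes the $k$-th largest singular value of $\boldsymbol{X}$. The energy minimizers $\boldsymbol{z}^{(1)},\dots,\boldsymbol{z}^{(n)}\in\mathbb{R}^n$ are defined recursively by $\boldsymbol{z}^{(k)}=\arg\min_{\boldsymbol{z}\in\mathbb{S}^{n-1}} E_{\mathcal{G}}(\boldsymbol{z})$ subject to $\boldsymbol{z}\perp\boldsymbol{z}^{(j)}$ for all $j\le k-1$, where $\mathbb{S}^{n-1}$ is the unit sphere in $\mathbb{R}^n$. The $k$-th principal component of $\boldsymbol{H}$ is the unit eigenvector of $\boldsymbol{C}=\widehat{\boldsymbol{H}}\widehat{\boldsymbol{H}}^\top\in\mathbb{R}^{n\times n}$ corresponding to its $k$-th largest eigenvalue, where $\widehat{\boldsymbol{H}}=\boldsymbol{H}-\frac1n\boldsymbol{1}\boldsymbol{1}^\top\boldsymbol{H}$ is the column-centered matrix and $\boldsymbol{1}$ is the all-ones vector. *)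

(* Defs.v *)
From HB Require Import structures.
From mathcomp Require Import all_boot all_order all_algebra.
From mathcomp Require Import reals.
Set Implicit Arguments. Unset Strict Implicit. Unset Printing Implicit Defensive.
Import Order.TTheory GRing.Theory Num.Theory.
Local Open Scope ring_scope.

Section Defs.
Variable R : realType.

Definition is_adjacency (n : nat) (A : 'M[R]_n) : Prop :=
  A^T = A /\ forall i j, A i j = 0 \/ A i j = 1.

Definition energy (n m : nat) (A : 'M[R]_n) (X : 'M[R]_(n, m)) : R :=
  \sum_(i < n) \sum_(j < n) A i j * \sum_(l < m) (X i l - X j l) ^+ 2.

Definition unit_vec (n : nat) (z : 'cV[R]_n) : Prop := z^T *m z = 1%:M.
Definition orth (n : nat) (y z : 'cV[R]_n) : Prop := y^T *m z = 0.

Definition energy_minimizers (n : nat) (A : 'M[R]_n) (z : nat -> 'cV[R]_n) : Prop :=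
  forall k, (1 <= k <= n)%N ->
    [/\ unit_vec (z k),
        (forall j, (1 <= j < k)%N -> orth (z j) (z k)) &
        forall y : 'cV[R]_n, unit_vec y ->
          (forall j, (1 <= j < k)%N -> orth (z j) y) ->
          energy A (z k) <= energy A y].

Definition orthogonal_mx (n : nat) (U : 'M[R]_n) : Prop := U^T *m U = 1%:M.

Definition is_svd (n d : nat) (X : 'M[R]_(n, d)) (U : 'M[R]_n) (S : 'M[R]_(n, d))
    (V : 'M[R]_d) : Prop :=
  [/\ orthogonal_mx U, orthogonal_mx V, X = U *m S *m V^T,
      (forall i j, val i <> val j -> S i j = 0) /\
      (forall i j, val i = val j -> 0 <= S i j) &
      (forall i i' j j', val i = val i' -> val j = val j' -> (val i <= val j)%N ->
          S j j' <= S i i')].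

Definition singval (n d : nat) (X : 'M[R]_(n, d)) (k : nat) (sigma : R) : Prop :=
  exists U S V, is_svd X U S V /\
    exists i j, [/\ val i = k.-1, val j = k.-1, (1 <= k)%N & S i j = sigma].

(* lam is the k-th largest eigenvalue (with multiplicity, 1-indexed) of the
   symmetric matrix C, read off an orthogonal diagonalization with sorted
   eigenvalues *)
Definition kth_eigenvalue (n : nat) (C : 'M[R]_n) (k : nat) (lam : R) : Prop :=
  exists (U : 'M[R]_n) (dv : 'rV[R]_n),
    [/\ orthogonal_mx U, C = U *m diag_mx dv *m U^T,
        (forall i j : 'I_n, (i <= j)%N -> dv 0 j <= dv 0 i) &
        exists i : 'I_n, val i = k.-1 /\ (1 <= k)%N /\ dv 0 i = lam].

Definition centered (n d : nat) (H : 'M[R]_(n, d)) : 'M[R]_(n, d) :=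
  H - (n%:R)^-1 *: (const_mx 1 *m H).

Definition cov (n d : nat) (H : 'M[R]_(n, d)) : 'M[R]_n :=
  centered H *m (centered H)^T.

Definition principal_component (n d : nat) (H : 'M[R]_(n, d)) (k : nat)
    (v : 'cV[R]_n) : Prop :=
  unit_vec v /\ exists lam, kth_eigenvalue (cov H) k lam /\ cov H *m v = lam *: v.

Definition feasible (n d s : nat) (eps : nat -> R) (X : 'M[R]_(n, d)) : Prop :=
  forall k, (1 <= k <= s)%N -> exists sigma, singval X k sigma /\ eps k <= sigma.

End Defs.

(* Main.v *)
Require Import Defs.
From HB Require Import structures.
From mathcomp Require Import all_boot all_order all_algebra perm.
From mathcomp Require Import reals complex ring lra zify.
Import Order.TTheory GRing.Theory Num.Theory.
Set Implicit Arguments. Unset Strict Implicit. Unset Printing Implicit Defensive.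
Local Open Scope ring_scope.


Section Core.
Variable R : realType.
Local Notation Re := (@complex.Re R).
Local Notation Im := (@complex.Im R).
Local Notation toC := (real_complex R).

Lemma Re_add (a b : R[i]) : Re (a + b) = Re a + Re b.
Proof. by case: a => ? ?; case: b. Qed.
Lemma Im_add (a b : R[i]) : Im (a + b) = Im a + Im b.
Proof. by case: a => ? ?; case: b. Qed.
Lemma Re_sum (I : finType) (F : I -> R[i]) : Re (\sum_i F i) = \sum_i Re (F i).
Proof. elim/big_rec2: _ => // i a b _ <-; by rewrite Re_add. Qed.
Lemma Im_sum (I : finType) (F : I -> R[i]) : Im (\sum_i F i) = \sum_i Im (F i).
Proof. elim/big_rec2: _ => // i a b _ <-; by rewrite Im_add. Qed.

Lemma mapRe_mul m n p (w : 'M[R[i]]_(m, n)) (M : 'M[R]_(n,p)) :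
  map_mx Re (w *m map_mx toC M) = map_mx Re w *m M.
Proof.
apply/matrixP => i k; rewrite !mxE Re_sum; apply: eq_bigr => j _.
by rewrite !mxE; case: (w i j) => a b /=; rewrite mulr0 subr0.
Qed.
Lemma mapIm_mul m n p (w : 'M[R[i]]_(m, n)) (M : 'M[R]_(n,p)) :
  map_mx Im (w *m map_mx toC M) = map_mx Im w *m M.
Proof.
apply/matrixP => i k; rewrite !mxE Im_sum; apply: eq_bigr => j _.
by rewrite !mxE; case: (w i j) => a b /=; rewrite mulr0 add0r.
Qed.
Lemma mapRe_scale m n (om : R[i]) (w : 'M[R[i]]_(m, n)) :
  map_mx Re (om *: w) = Re om *: map_mx Re w - Im om *: map_mx Im w.
Proof.
by apply/matrixP => i k; rewrite !mxE; case: om => a b; case: (w i k) => c d.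
Qed.
Lemma mapIm_scale m n (om : R[i]) (w : 'M[R[i]]_(m, n)) :
  map_mx Im (om *: w) = Re om *: map_mx Im w + Im om *: map_mx Re w.
Proof.
by apply/matrixP => i k; rewrite !mxE; case: om => a b; case: (w i k) => c d /=;
  rewrite addrC.
Qed.

Lemma ReIm_eq0 m n (v : 'M[R[i]]_(m, n)) : map_mx Re v = 0 -> map_mx Im v = 0 -> v = 0.
Proof.
move=> h1 h2; apply/matrixP => i k.
have := congr1 (fun m : 'M[R]_(m, n) => m i k) h1; have := congr1 (fun m : 'M[R]_(m, n) => m i k) h2.
rewrite !mxE; case: (v i k) => a b /= -> -> //.
Qed.

Definition dotr n (x y : 'rV[R]_n) : R := (x *m y^T) 0 0.

Lemma dotrC n (x y : 'rV[R]_n) : dotr x y = dotr y x.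
Proof. by rewrite /dotr !mxE; apply: eq_bigr => k _; rewrite !mxE mulrC. Qed.

Lemma dotr_ge0 n (x : 'rV[R]_n) : 0 <= dotr x x.
Proof. by rewrite /dotr mxE; apply: sumr_ge0 => k _; rewrite mxE -expr2 sqr_ge0. Qed.

Lemma dotr_eq0 n (x : 'rV[R]_n) : dotr x x = 0 -> x = 0.
Proof.
rewrite /dotr mxE => H; apply/rowP => k; rewrite mxE.
have h : forall i : 'I_n, true -> 0 <= x 0 i * x^T i 0.
  by move=> i _; rewrite mxE -expr2 sqr_ge0.
move: (psumr_eq0P h H (i:=k) isT); rewrite mxE => /eqP; rewrite mulf_eq0 orbb => /eqP.
done.
Qed.

Lemma dotrZl n a (x y : 'rV[R]_n) : dotr (a *: x) y = a * dotr x y.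
Proof. by rewrite /dotr -scalemxAl mxE. Qed.
Lemma dotrDl n (x x' y : 'rV[R]_n) : dotr (x + x') y = dotr x y + dotr x' y.
Proof. by rewrite /dotr mulmxDl mxE. Qed.
Lemma dotrNl n (x y : 'rV[R]_n) : dotr (- x) y = - dotr x y.
Proof. by rewrite /dotr mulNmx mxE. Qed.

Lemma dotr_sym n (M : 'M[R]_n) (x y : 'rV[R]_n) : M^T = M ->
  dotr (x *m M) y = dotr (y *m M) x.
Proof.
move=> Ms; rewrite /dotr.
have -> : (x *m M *m y^T) 0 0 = ((x *m M *m y^T)^T) 0 0 by rewrite [RHS]mxE.
by rewrite !trmx_mul trmxK Ms mulmxA.
Qed.

Lemma sym_eigvec_in n r (M : 'M[R]_n) (W : 'M[R]_(r, n)) :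
  M^T = M -> (forall v : 'rV_n, (v <= W)%MS -> (v *m M <= W)%MS) -> (0 < \rank W)%N ->
  exists v : 'rV_n, [/\ v != 0, (v <= W)%MS & exists a, v *m M = a *: v].
Proof.
move=> Msym Winv rW.
set B := row_base W.
have BM : (B *m M <= B)%MS.
  rewrite (eq_row_base W); apply/row_subP => i; rewrite row_mul; apply: Winv.
  by rewrite -(eq_row_base W) row_sub.
set X := B *m M *m pinvmx B.
have BMX : X *m B = B *m M by rewrite mulmxKpV.
pose Xc := map_mx toC X.
have [om] : exists om, eigenvalue Xc om.
  have : size (char_poly Xc) != 1%N by rewrite size_char_poly; case: (\rank W) rW.
  by case/closed_rootP => om; exists om; rewrite eigenvalue_root_char.
move=> /eigenvalueP [y yX ynz].
pose w := y *m map_mx toC B.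
have wnz : w != 0.
  rewrite /w mulmx_free_eq0 // /row_free mxrank_map.
  exact: row_base_free.
have wM : w *m map_mx toC M = om *: w.
  by rewrite /w -mulmxA -map_mxM -BMX map_mxM mulmxA yX scalemxAl.
pose x := map_mx Re w; pose z := map_mx Im w.
have xM : x *m M = Re om *: x - Im om *: z by rewrite /x -mapRe_mul wM mapRe_scale.
have zM : z *m M = Re om *: z + Im om *: x by rewrite /z -mapIm_mul wM mapIm_scale.
have xW : (x <= W)%MS.
  by rewrite /x /w mapRe_mul -(eq_row_base W) submxMl.
have zW : (z <= W)%MS.
  by rewrite /z /w mapIm_mul -(eq_row_base W) submxMl.
have xz : x != 0 \/ z != 0.
  case: (eqVneq x 0) => [x0|]; last by left.
  case: (eqVneq z 0) => [z0|]; last by right.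
  have w0 : w = 0 by apply: ReIm_eq0.
  by rewrite w0 eqxx in wnz.
have hb : Im om = 0.
  have e := dotr_sym x z Msym.
  rewrite xM zM dotrDl dotrNl !dotrZl dotrDl !dotrZl (dotrC x z) in e.
  have : Im om * (dotr x x + dotr z z) = 0.
    move: e; set p := dotr z x; set q := dotr x x; set t := dotr z z; move=> e.
    have h : Re om * p - Im om * t - (Re om * p + Im om * q) = 0 by rewrite e subrr.
    have h2 : - (Im om * (q + t)) = 0 by rewrite -[RHS]h; ring.
    by apply/eqP; rewrite -oppr_eq0 h2.
  move/eqP; rewrite mulf_eq0 => /orP [/eqP //|].
  move=> hs; exfalso.
  have hx := dotr_ge0 x; have hz := dotr_ge0 z.
  have hx0 : dotr x x = 0.
    by apply/eqP; rewrite eq_le hx andbT -(eqP hs) lerDl.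
  have hz0 : dotr z z = 0.
    by move/eqP: hs; rewrite hx0 add0r.
  by case: xz => /eqP []; apply: dotr_eq0.
case: xz => [xnz|znz].
  by exists x; split => //; exists (Re om); rewrite xM hb scale0r subr0.
by exists z; split => //; exists (Re om); rewrite zM hb scale0r addr0.
Qed.

Definition orthonormal n k (g : nat -> 'rV[R]_n) :=
  forall i j, (i < k)%N -> (j < k)%N -> dotr (g i) (g j) = (i == j)%:R.

Lemma dotr_trmx n (v : 'rV[R]_n) k (F : 'M[R]_(k, n)) (i : 'I_k) :
  (v *m F^T) 0 i = dotr v (row i F).
Proof. by rewrite /dotr !mxE; apply: eq_bigr => j _; rewrite !mxE. Qed.

Lemma orth_compl_inv n k (g : nat -> 'rV[R]_n) (M : 'M[R]_n) :
  M^T = M -> (forall i, (i < k)%N -> exists a, g i *m M = a *: g i) ->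
  forall v : 'rV_n, (v <= kermx (\matrix_(i < k) g i)^T)%MS ->
    (v *m M <= kermx (\matrix_(i < k) g i)^T)%MS.
Proof.
move=> Ms hg v; rewrite !sub_kermx => /eqP h; apply/eqP/rowP => i.
rewrite dotr_trmx rowK dotr_sym // mxE.
have [a ->] := hg i (ltn_ord i).
rewrite dotrZl dotrC.
have := congr1 (fun m : 'rV[R]_k => m 0 i) h; rewrite dotr_trmx rowK mxE => ->.
by rewrite mulr0.
Qed.

Lemma in_orth_compl n k (g : nat -> 'rV[R]_n) (v : 'rV[R]_n) :
  (v <= kermx (\matrix_(i < k) g i)^T)%MS -> forall i, (i < k)%N -> dotr v (g i) = 0.
Proof.
rewrite sub_kermx => /eqP h i ik.
have := congr1 (fun m : 'rV[R]_k => m 0 (Ordinal ik)) h.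
by rewrite dotr_trmx rowK mxE.
Qed.

Lemma normalize n (u : 'rV[R]_n) : u != 0 ->
  dotr ((Num.sqrt (dotr u u))^-1 *: u) ((Num.sqrt (dotr u u))^-1 *: u) = 1.
Proof.
move=> unz; rewrite dotrZl dotrC dotrZl mulrA.
have hp : 0 < dotr u u.
  rewrite lt_def dotr_ge0 andbT; apply/eqP => h; move/eqP: unz; apply.
  exact: dotr_eq0.
rewrite -expr2 exprVn sqr_sqrtr ?ltW // mulVf //.
by rewrite gt_eqF.
Qed.

Lemma common_basis n (M1 M2 : 'M[R]_n) (e : 'rV[R]_n) :
  M1^T = M1 -> M2^T = M2 -> M1 *m M2 = M2 *m M1 ->
  dotr e e = 1 -> (exists a, e *m M1 = a *: e) -> (exists b, e *m M2 = b *: e) ->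
  forall k, (0 < k <= n)%N -> exists g : nat -> 'rV[R]_n,
    [/\ g 0%N = e, orthonormal k g &
      forall i, (i < k)%N -> (exists a, g i *m M1 = a *: g i) /\ (exists b, g i *m M2 = b *: g i)].
Proof.
move=> M1s M2s Mc ee e1 e2; elim => [//|k IH] /andP [_ kn].
case: k IH kn => [_ _|k IH kn].
  exists (fun _ => e); split.
  - by [].
  - by move=> [|i] [|j].
  - by move=> [|i] // _; split.
have [g [g0 gon geig]] := IH (ltnW kn).
set W := kermx (\matrix_(i < k.+1) g i)^T.
have W1 := orth_compl_inv M1s (fun i ik => (geig i ik).1).
have W2 := orth_compl_inv M2s (fun i ik => (geig i ik).2).
have rW : (0 < \rank W)%N.
  rewrite mxrank_ker subn_gt0 mxrank_tr (leq_ltn_trans (rank_leq_row _)) //.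
have [v1 [v1nz v1W [a v1M]]] := sym_eigvec_in M1s W1 rW.
set W' := (W :&: kermx (M1 - a%:M))%MS.
have v1W' : (v1 <= W')%MS.
  by rewrite sub_capmx v1W /= sub_kermx mulmxBr v1M mul_mx_scalar subrr.
have rW' : (0 < \rank W')%N.
  by apply: leq_trans (mxrankS v1W'); rewrite rank_rV v1nz.
have W'inv : forall v : 'rV_n, (v <= W')%MS -> (v *m M2 <= W')%MS.
  move=> v; rewrite !sub_capmx => /andP [vW vK]; rewrite W2 //=.
  rewrite sub_kermx -mulmxA mulmxBr -Mc scalar_mxC -mulmxBl mulmxA.
  by move/sub_kermxP: vK => ->; rewrite mul0mx.
have [u [unz uW' [b uM]]] := sym_eigvec_in M2s W'inv rW'.
move: uW'; rewrite sub_capmx => /andP [uW /sub_kermxP uK].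
have uM1 : u *m M1 = a *: u.
  by apply/eqP; rewrite -subr_eq0 -mul_mx_scalar -mulmxBr uK.
have uo := in_orth_compl uW.
set c := (Num.sqrt (dotr u u))^-1.
pose g' := (fun i => if i == k.+1 then c *: u else g i).
exists g'; split.
- rewrite /g' /=. exact: g0.
- move=> i j; rewrite ltnS leq_eqVlt => /orP [/eqP ->|ik]; rewrite ltnS leq_eqVlt => /orP [/eqP ->|jk]; rewrite /g'.
  + rewrite eqxx. exact: normalize.
  + rewrite eqxx (ltn_eqF jk) eq_sym (ltn_eqF jk) dotrZl uo // mulr0. done.
  + rewrite eqxx (ltn_eqF ik) dotrC dotrZl uo // mulr0. done.
  + rewrite (ltn_eqF ik) (ltn_eqF jk). exact: gon.
- move=> i; rewrite ltnS leq_eqVlt /g' => /orP [/eqP ->|ik].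
    rewrite eqxx; split; [exists a | exists b];
    by rewrite -scalemxAl ?uM1 ?uM scalerA mulrC -scalerA.
  rewrite (ltn_eqF ik); exact: geig.
Qed.

Definition onb n (f : 'I_n -> 'rV[R]_n) := forall i j, dotr (f i) (f j) = (i == j)%:R.

Lemma mulmx_outer n p (v u : 'rV[R]_n) (w : 'M[R]_(1, p)) :
  v *m (u^T *m w) = dotr v u *: w.
Proof. by rewrite mulmxA [v *m u^T]mx11_scalar mul_scalar_mx. Qed.

Lemma onb_complete n (f : 'I_n -> 'rV[R]_n) : onb f -> \sum_m (f m)^T *m f m = 1%:M.
Proof.
move=> hf; set F : 'M[R]_n := \matrix_(i < n) f i.
have FF : F *m F^T = 1%:M.
  apply/matrixP => a b; rewrite !mxE -hf /dotr mxE; apply: eq_bigr => k _.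
  by rewrite !mxE.
have := mulmx1C FF => <-.
apply/matrixP => a b; rewrite summxE !mxE; apply: eq_bigr => m _.
by rewrite !mxE big_ord1 !mxE.
Qed.

Lemma onb_decomp n (f : 'I_n -> 'rV[R]_n) (v : 'rV[R]_n) : onb f ->
  v = \sum_m dotr v (f m) *: f m.
Proof.
move=> hf; rewrite -{1}(mulmx1 v) -(onb_complete hf) mulmx_sumr.
by apply: eq_bigr => m _; rewrite mulmx_outer.
Qed.

Lemma onb_ext n p (f : 'I_n -> 'rV[R]_n) (P Q : 'M[R]_(n, p)) : onb f ->
  (forall m, f m *m P = f m *m Q) -> P = Q.
Proof.
move=> hf h; rewrite -(mul1mx P) -(mul1mx Q) -(onb_complete hf) !mulmx_suml.
by apply: eq_bigr => m _; rewrite -!mulmxA h.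
Qed.

Lemma dotr_sum n (I : finType) (F : I -> 'rV[R]_n) (y : 'rV[R]_n) :
  dotr (\sum_i F i) y = \sum_i dotr (F i) y.
Proof. by rewrite /dotr mulmx_suml summxE. Qed.

Lemma onb_parseval n (f : 'I_n -> 'rV[R]_n) (v : 'rV[R]_n) : onb f ->
  dotr v v = \sum_m dotr v (f m) ^+ 2.
Proof.
move=> hf; rewrite {1}(onb_decomp v hf) dotr_sum; apply: eq_bigr => m _.
by rewrite dotrZl dotrC expr2.
Qed.

Section Graph.
Variable n : nat.
Variable A : 'M[R]_n.
Hypothesis Asym : A^T = A.

Definition Lap : 'M[R]_n := diag_mx (\row_i \sum_k A i k) - A.

Lemma Lap_sym : Lap^T = Lap.
Proof. by rewrite /Lap linearB /= tr_diag_mx Asym. Qed.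

Lemma quad_vec (a : 'I_n -> R) :
  \sum_i \sum_j A i j * (a i - a j)^+2 = 2 * \sum_i \sum_j a i * Lap i j * a j.
Proof.
have e1 : \sum_i \sum_j A i j * (a i - a j)^+2 =
   \sum_i \sum_j A i j * a i ^+ 2 + \sum_i \sum_j A i j * a j ^+ 2
   - 2 * \sum_i \sum_j A i j * a i * a j.
  rewrite mulr_sumr -!big_split -sumrN -big_split /=; apply: eq_bigr => i _.
  rewrite mulr_sumr -!big_split -sumrN -big_split /=; apply: eq_bigr => j _.
  ring.
have e2 : \sum_i \sum_j A i j * a j ^+ 2 = \sum_i \sum_j A i j * a i ^+ 2.
  rewrite exchange_big /=; apply: eq_bigr => i _; apply: eq_bigr => j _.
  by have := congr1 (fun M : 'M[R]_n => M i j) Asym; rewrite mxE => ->.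
have e3 : forall i, \sum_j a i * Lap i j * a j = \sum_j A i j * a i ^+ 2 - \sum_j A i j * a i * a j.
  move=> i; rewrite /Lap.
  have -> : \sum_j a i * (diag_mx (\row_i0 \sum_k A i0 k) - A) i j * a j =
     \sum_j a i * ((diag_mx (\row_i0 \sum_k A i0 k)) i j) * a j - \sum_j A i j * a i * a j.
    rewrite -sumrN -big_split /=; apply: eq_bigr => j _; rewrite !mxE; ring.
  congr (_ - _); rewrite (bigD1 i) //= big1 ?addr0.
    by rewrite !mxE eqxx mulr1n mulr_sumr mulr_suml; apply: eq_bigr => j _; ring.
  by move=> j ji; rewrite !mxE eq_sym (negbTE ji) mulr0n mulr0 mul0r.
rewrite e1 e2 (eq_bigr _ (fun i _ => e3 i)) sumrB; ring.
Qed.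

Lemma energy_tr d (X : 'M[R]_(n, d)) : energy A X = 2 * \tr (X^T *m Lap *m X).
Proof.
rewrite /energy /mxtrace.
have -> : \sum_i \sum_j A i j * \sum_l (X i l - X j l) ^+ 2 =
    \sum_l \sum_i \sum_j A i j * (X i l - X j l) ^+ 2.
  symmetry; rewrite exchange_big /=; apply: eq_bigr => i _.
  rewrite exchange_big /=; apply: eq_bigr => j _; by rewrite mulr_sumr.
rewrite mulr_sumr; apply: eq_bigr => l _; rewrite quad_vec; congr (_ * _).
rewrite mxE exchange_big /=; apply: eq_bigr => i _; rewrite mxE mulr_suml.
by apply: eq_bigr => j _; rewrite !mxE.
Qed.

Lemma energy_onb d (f : 'I_n -> 'rV_n) (lam : 'I_n -> R) (X : 'M[R]_(n, d)) :
  onb f -> (forall m, f m *m Lap = lam m *: f m) ->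
  energy A X = 2 * \sum_m lam m * dotr (f m *m X) (f m *m X).
Proof.
move=> hf hl; rewrite energy_tr.
have -> : Lap = \sum_m lam m *: ((f m)^T *m f m).
  rewrite -{1}(mul1mx Lap) -(onb_complete hf) mulmx_suml; apply: eq_bigr => m _.
  by rewrite -mulmxA hl scalemxAr.
rewrite mulmx_sumr mulmx_suml raddf_sum; congr (_ * _); apply: eq_bigr => m _.
change (\tr (X^T *m (lam m *: ((f m)^T *m f m)) *m X) = lam m * dotr (f m *m X) (f m *m X)).
rewrite -scalemxAr -scalemxAl mxtraceZ; congr (_ * _).
have -> : X^T *m ((f m)^T *m f m) *m X = (f m *m X)^T *m (f m *m X) by rewrite trmx_mul !mulmxA.
rewrite mxtrace_mulC /dotr /mxtrace big_ord1.
by [].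
Qed.

End Graph.
End Core.



Section Rot.
Variable R : realType.
Variable n : nat.
Variable A : 'M[R]_n.
Hypothesis Asym : A^T = A.
Variable f : 'I_n -> 'rV[R]_n.
Hypothesis hf : onb f.
Variable lam : 'I_n -> R.
Hypothesis hl : forall m, f m *m Lap A = lam m *: f m.

Lemma dotrDr k (x y y' : 'rV[R]_k) : dotr x (y + y') = dotr x y + dotr x y'.
Proof. by rewrite dotrC dotrDl dotrC (dotrC y'). Qed.
Lemma dotrZr k a (x y : 'rV[R]_k) : dotr x (a *: y) = a * dotr x y.
Proof. by rewrite dotrC dotrZl dotrC. Qed.

Lemma dotr_comb k (x y : R) (a b : 'rV[R]_k) :
  dotr (x *: a + y *: b) (x *: a + y *: b) =
  x^+2 * dotr a a + 2 * x * y * dotr a b + y^+2 * dotr b b.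
Proof.
rewrite !dotrDl !dotrDr !dotrZl !dotrZr (dotrC b a); ring.
Qed.

Definition Orot (i j : 'I_n) (c s : R) : 'M[R]_n :=
  1%:M + (c - 1) *: ((f i)^T *m f i + (f j)^T *m f j) + s *: ((f i)^T *m f j - (f j)^T *m f i).

Lemma Orot_tr i j c s : (Orot i j c s)^T = Orot i j c (- s).
Proof.
rewrite /Orot !raddfD /= !linearZ /= raddfN /= !trmx_mul !trmxK trmx1 !scaleNr !scalerN opprK.
by congr (_ + _); rewrite addrC.
Qed.

Lemma rowO i j c s m : i != j ->
  f m *m Orot i j c s =
  if m == i then c *: f i + s *: f j
  else if m == j then (- s) *: f i + c *: f j else f m.
Proof.
move=> ij; rewrite /Orot !mulmxDr mulmx1 -!scalemxAr mulmxDr mulmxBr !mulmx_outer !hf.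
have e : forall v : 'rV[R]_n, v + (c - 1) *: v = c *: v.
  by move=> v; rewrite scalerBl scale1r addrC subrK.
case: (eqVneq m i) => [->|mi].
  rewrite (negbTE ij) /= !(scale1r, scale0r, addr0, subr0, sub0r).
  by rewrite ?addrA e.
case: (eqVneq m j) => [->|mj].
  rewrite /= !(scale1r, scale0r, addr0, subr0, sub0r, add0r).
  by rewrite ?addrA e addrC scalerN scaleNr.
by rewrite /= !(scale1r, scale0r, addr0, subr0, sub0r, add0r, scaler0).
Qed.

Lemma Orot_orth i j c s : i != j -> c ^+ 2 + s ^+ 2 = 1 ->
  (Orot i j c s)^T *m Orot i j c s = 1%:M.
Proof.
move=> ij cs; have ji : j != i by rewrite eq_sym.
apply: mulmx1C; apply: (onb_ext hf) => m.
rewrite mulmxA rowO // Orot_tr mulmx1.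
case: (eqVneq m i) => [->|mi].
  rewrite mulmxDl -!scalemxAl !rowO // ?eqxx ?(negbTE ij) ?(negbTE ji).
  apply/rowP => k; rewrite !mxE.
  transitivity ((c^+2 + s^+2) * f i 0 k); [ring | by rewrite cs mul1r].
case: (eqVneq m j) => [->|mj].
  rewrite mulmxDl -!scalemxAl !rowO // ?eqxx ?(negbTE ij) ?(negbTE ji).
  apply/rowP => k; rewrite !mxE.
  transitivity ((c^+2 + s^+2) * f j 0 k); [ring | by rewrite cs mul1r].
by rewrite rowO // (negbTE mi) (negbTE mj).
Qed.

Definition Gm d (X : 'M[R]_(n, d)) a b := dotr (f a *m X) (f b *m X).

Lemma energy_rot d (X : 'M[R]_(n, d)) i j c s : i != j -> c ^+ 2 + s ^+ 2 = 1 ->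
  energy A (Orot i j c s *m X) = energy A X +
    2 * ((lam j - lam i) * (s ^+ 2 * (Gm X i i - Gm X j j) - 2 * c * s * Gm X i j)).
Proof.
move=> ij cs; rewrite !(energy_onb Asym _ hf hl).
rewrite (bigD1 i) //= (bigD1 j) 1?eq_sym //=.
rewrite [in RHS](bigD1 i) //= [in RHS](bigD1 j) 1?eq_sym //=.
have -> : \sum_(m | (m != i) && (m != j)) lam m * dotr (f m *m (Orot i j c s *m X)) (f m *m (Orot i j c s *m X))
   = \sum_(m | (m != i) && (m != j)) lam m * dotr (f m *m X) (f m *m X).
  apply: eq_bigr => m /andP [mi mj]; by rewrite mulmxA rowO // (negbTE mi) (negbTE mj).
have ji : j != i by rewrite eq_sym.
rewrite !mulmxA !rowO // ?eqxx ?(negbTE ij) ?(negbTE ji).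
rewrite !mulmxDl -!scalemxAl !dotr_comb /Gm ?(dotrC (f j *m X) (f i *m X)).
set S := \sum_(_ | _) _.
have -> : c ^+ 2 = 1 - s ^+ 2 by rewrite -cs addrK.
ring.
Qed.

End Rot.



Lemma sort_perm n (r : rel 'I_n.+1) : total r -> transitive r -> reflexive r ->
  exists p : {perm 'I_n.+1}, forall a b : 'I_n.+1, (a <= b)%N -> r (p a) (p b).
Proof.
move=> tot tr rf.
set sq := sort r (enum 'I_n.+1).
have ss : size sq = n.+1 by rewrite size_sort size_enum_ord.
have us : uniq sq by rewrite sort_uniq enum_uniq.
have pinj : injective (fun a : 'I_n.+1 => nth ord0 sq a).
  move=> a b /eqP; rewrite nth_uniq ?ss // => /eqP; exact: val_inj.
exists (perm pinj) => a b ab; rewrite !permE.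
by apply: (sorted_leq_nth tr rf ord0 (sort_sorted tot _)); rewrite ?inE ?ss.
Qed.

Section Main.
Variable R : realType.


Lemma feasible_rot n d s (eps : nat -> R) (H : 'M[R]_(n, d)) (O : 'M[R]_n) :
  O^T *m O = 1%:M -> feasible s eps H -> feasible s eps (O *m H).
Proof.
move=> hO hH k hk; have [sig [[U [S [V [[hU hV hX hS1 hS2] hij]]]] hle]] := hH k hk.
exists sig; split => //; exists (O *m U), S, V; split => //; split => //.
- by rewrite /orthogonal_mx trmx_mul mulmxA -(mulmxA _ _ O) hO mulmx1.
- by rewrite hX !mulmxA.
Qed.

Lemma small_t (d g : R) : (forall t : R, 0 <= t ^+ 2 * d - t * (1 - t ^+ 2) * g) -> g = 0.
Proof.
move=> h; case: (eqVneq g 0) => // gnz; exfalso.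
set e := (`|d| + g ^+ 2 + 1)^-1.
have hpos : 0 < `|d| + g ^+ 2 + 1 by have := normr_ge0 d; have := sqr_ge0 g; lra.
have ep : 0 < e by rewrite invr_gt0.
have e1 : e * (`|d| + g ^+ 2 + 1) = 1 by rewrite mulVf // lt0r_neq0.
have g2 : 0 < g ^+ 2 by rewrite lt_def sqrf_eq0 gnz sqr_ge0.
have := h (e * g).
have hd : - `|d| <= d <= `|d| by rewrite -ler_norml.
have el1 : e <= 1.
  have : e * (`|d| + g ^+ 2) + e = 1 by rewrite -e1; ring.
  have : 0 <= e * (`|d| + g ^+ 2) by apply: mulr_ge0; [lra| have := normr_ge0 d; lra].
  lra.
have key : e * d + e ^+ 2 * g ^+ 2 < 1.
  have : e * (`|d| + g ^+ 2) < 1 by have := normr_ge0 d; nra.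
  have : e * d <= e * `|d| by apply: ler_wpM2l; lra.
  have eg : 0 <= e * g ^+ 2 by apply: mulr_ge0; lra.
  have : e ^+ 2 * g ^+ 2 <= e * g ^+ 2.
    have -> : e ^+ 2 * g ^+ 2 = e * (e * g ^+ 2) by rewrite expr2 mulrA.
    have : 0 <= (1 - e) * (e * g ^+ 2) by apply: mulr_ge0; lra.
    lra.
  nra.
have -> : (e * g) ^+ 2 * d - e * g * (1 - (e * g) ^+ 2) * g =
   e * g ^+ 2 * (e * d + e ^+ 2 * g ^+ 2 - 1) by ring.
rewrite pmulr_rge0; last by apply: mulr_gt0.
lra.
Qed.

End Main.



Section Opt.
Variable R : realType.
Variables n d : nat.
Variable A : 'M[R]_n.
Hypothesis Asym : A^T = A.
Variable H : 'M[R]_(n, d).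
Hypothesis Hopt : forall O : 'M[R]_n, O^T *m O = 1%:M -> energy A H <= energy A (O *m H).
Variable f : 'I_n -> 'rV[R]_n.
Hypothesis hf : onb f.
Variable lam : 'I_n -> R.
Hypothesis hl : forall m, f m *m Lap A = lam m *: f m.

Lemma rot_nonneg i j c s : i != j -> c ^+ 2 + s ^+ 2 = 1 ->
  0 <= (lam j - lam i) * (s ^+ 2 * (Gm f H i i - Gm f H j j) - 2 * c * s * Gm f H i j).
Proof.
move=> ij cs; have := Hopt (Orot_orth hf ij cs).
rewrite (energy_rot Asym hf hl) //; lra.
Qed.

Lemma Gm_zero i j : lam i != lam j -> Gm f H i j = 0.
Proof.
move=> lij; have ij : i != j by apply: contraNneq lij => ->.
have kz : lam j - lam i != 0 by rewrite subr_eq0 eq_sym.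
apply: (mulfI kz); rewrite mulr0.
set k := lam j - lam i.
apply: (@small_t _ (k * (Gm f H i i - Gm f H j j))) => t.
set q := 1 + t ^+ 2.
have qp : 0 < q by rewrite /q; have := sqr_ge0 t; lra.
have qz : q != 0 by rewrite lt0r_neq0.
have cs : ((1 - t ^+ 2) / q) ^+ 2 + (2 * t / q) ^+ 2 = 1.
  by rewrite /q; field; rewrite -/q.
have := rot_nonneg ij cs.
have -> : k * ((2 * t / q) ^+ 2 * (Gm f H i i - Gm f H j j) -
    2 * ((1 - t ^+ 2) / q) * (2 * t / q) * Gm f H i j) =
  (4 / q ^+ 2) * (t ^+ 2 * (k * (Gm f H i i - Gm f H j j)) - t * (1 - t ^+ 2) * (k * Gm f H i j)).
  by field.
rewrite pmulr_rge0 //; apply: divr_gt0 => //; last by rewrite exprn_gt0.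
Qed.

End Opt.



Section MainS.
Variable R : realType.
Variables n' d : nat.
Local Notation n := n'.+1.
Variable A : 'M[R]_n.
Hypothesis Asym : A^T = A.
Variable H : 'M[R]_(n, d).

Definition ee : 'rV[R]_n := const_mx (Num.sqrt (n%:R))^-1.

Lemma sqrtn_pos : 0 < Num.sqrt (n%:R : R).
Proof. by rewrite sqrtr_gt0 ltr0n. Qed.

Lemma ee_unit : dotr ee ee = 1.
Proof.
rewrite /dotr mxE (eq_bigr (fun _ => (Num.sqrt (n%:R : R))^-1 ^+ 2)); last first.
  by move=> k _; rewrite !mxE expr2.
rewrite sumr_const card_ord exprVn sqr_sqrtr ?ler0n // -(mulr_natr ((n%:R : R)^-1)) mulVf //.
by rewrite pnatr_eq0.
Qed.

Lemma Lap_colsum k : \sum_i Lap A i k = 0.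
Proof.
rewrite /Lap (eq_bigr (fun i => (diag_mx (\row_i0 \sum_k0 A i0 k0)) i k - A i k)); last first.
  by move=> i _; rewrite !mxE.
rewrite sumrB (bigD1 k) //= big1 ?addr0; last first.
  by move=> i ik; rewrite !mxE (negbTE ik) mulr0n.
rewrite !mxE eqxx mulr1n; apply/eqP; rewrite subr_eq0; apply/eqP; apply: eq_bigr => i _.
by have := congr1 (fun M : 'M[R]_n => M i k) Asym; rewrite mxE => ->.
Qed.

Lemma ee_Lap : ee *m Lap A = 0.
Proof.
apply/rowP => k; rewrite !mxE (eq_bigr (fun i => (Num.sqrt (n%:R : R))^-1 * Lap A i k)).
  by rewrite -mulr_sumr Lap_colsum mulr0.
by move=> i _; rewrite mxE.
Qed.

Lemma row_ones (v : 'rV[R]_n) : v *m (const_mx 1 : 'M[R]_n) = const_mx (\sum_k v 0 k).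
Proof. by apply/rowP => k; rewrite !mxE; apply: eq_bigr => i _; rewrite mxE mulr1. Qed.

Lemma dotr_ee (v : 'rV[R]_n) : dotr v ee = (Num.sqrt (n%:R : R))^-1 * \sum_k v 0 k.
Proof. by rewrite /dotr mxE mulr_sumr; apply: eq_bigr => k _; rewrite !mxE mulrC. Qed.

Lemma perp_sum (v : 'rV[R]_n) : dotr v ee = 0 -> \sum_k v 0 k = 0.
Proof.
rewrite dotr_ee => /eqP; rewrite mulf_eq0 invr_eq0 => /orP [|/eqP //].
by rewrite gt_eqF // sqrtn_pos.
Qed.

Lemma Hc_perp (v : 'rV[R]_n) : dotr v ee = 0 -> v *m centered H = v *m H.
Proof.
move=> h; rewrite /centered mulmxBr -scalemxAr mulmxA row_ones perp_sum //.
have -> : (const_mx 0 : 'rV[R]_n) = 0 by []. by rewrite mul0mx scaler0 subr0.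
Qed.

Lemma ee_Hc : ee *m centered H = 0.
Proof.
rewrite /centered mulmxBr -scalemxAr mulmxA.
have -> : ee *m (const_mx 1 : 'M[R]_n) = n%:R *: ee.
  apply/rowP => k; rewrite !mxE (eq_bigr (fun _ => (Num.sqrt (n%:R : R))^-1)).
    by rewrite sumr_const card_ord mulr_natl.
  by move=> i _; rewrite !mxE mulr1.
by rewrite -scalemxAl scalerA mulVf ?pnatr_eq0 // scale1r subrr.
Qed.

Lemma cov_sym : (cov H)^T = cov H.
Proof. by rewrite /cov trmx_mul trmxK. Qed.

Lemma dotr_cov (v w : 'rV[R]_n) : dotr (v *m cov H) w = dotr (v *m centered H) (w *m centered H).
Proof. by rewrite /dotr /cov trmx_mul !mulmxA. Qed.

Lemma ee_cov : ee *m cov H = 0.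
Proof. by rewrite /cov mulmxA ee_Hc mul0mx. Qed.

End MainS.



Section Main2.
Variable R : realType.
Variables n' d : nat.
Local Notation n := n'.+1.
Variable A : 'M[R]_n.
Hypothesis Asym : A^T = A.
Hypothesis A01 : forall i j, A i j = 0 \/ A i j = 1.
Variable H : 'M[R]_(n, d).
Hypothesis Hopt : forall O : 'M[R]_n, O^T *m O = 1%:M -> energy A H <= energy A (O *m H).

Local Notation L := (Lap A).
Local Notation C := (cov H).
Local Notation e := (ee R n').

Lemma rayleigh (v : 'rV[R]_n) M : dotr v v = 1 -> (exists a, v *m M = a *: v) ->
  v *m M = dotr (v *m M) v *: v.
Proof. by move=> vv [a h]; rewrite h dotrZl vv mulr1. Qed.

Lemma get_basis (M2 : 'M[R]_n) : M2^T = M2 -> L *m M2 = M2 *m L -> e *m M2 = 0 ->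
  exists f : 'I_n -> 'rV[R]_n, [/\ onb f, f ord0 = e &
     forall m, f m *m L = dotr (f m *m L) (f m) *: f m /\
               f m *m M2 = dotr (f m *m M2) (f m) *: f m].
Proof.
move=> M2s comm eM2.
have e1 : exists a, e *m L = a *: e by exists 0; rewrite (ee_Lap Asym) scale0r.
have e2 : exists a, e *m M2 = a *: e by exists 0; rewrite eM2 scale0r.
have [|g [g0 gon geig]] := common_basis (Lap_sym Asym) M2s comm (ee_unit R n') e1 e2 (k:=n).
  by rewrite leqnn.
exists (fun i : 'I_n => g i); split => //.
- by move=> i j; apply: gon.
- move=> m; have [h1 h2] := geig m (ltn_ord m); have u := gon m m (ltn_ord m) (ltn_ord m).
  rewrite eqxx in u; by split; apply: rayleigh.
Qed.

Lemma dotr0l k (v : 'rV[R]_k) : dotr 0 v = 0.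
Proof. by rewrite /dotr mul0mx mxE. Qed.

Lemma cov_comm : L *m C = C *m L.
Proof.
have [f1 [hf1 f10 hl1]] := get_basis (Lap_sym Asym) erefl (ee_Lap Asym).
set lam1 := fun m => dotr (f1 m *m L) (f1 m).
have hl : forall m, f1 m *m L = lam1 m *: f1 m by move=> m; rewrite /lam1 -(hl1 m).1.
apply: (onb_ext hf1) => m.
rewrite [LHS]mulmxA [RHS]mulmxA hl -scalemxAl.
have dec := onb_decomp (f1 m *m C) hf1.
rewrite dec mulmx_suml scaler_sumr; apply: eq_bigr => b _.
rewrite -scalemxAl hl !scalerA.
have perp : forall a, a != ord0 -> dotr (f1 a) (e) = 0.
  by move=> a a0; rewrite -f10 hf1 (negbTE a0).
case: (eqVneq (lam1 m) (lam1 b)) => [->|lmb]; first by rewrite mulrC.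
suff -> : dotr (f1 m *m C) (f1 b) = 0 by rewrite !mulr0 mul0r.
rewrite dotr_cov.
case: (eqVneq m ord0) => [->|m0]; first by rewrite f10 ee_Hc dotr0l.
case: (eqVneq b ord0) => [->|b0]; first by rewrite f10 ee_Hc dotrC dotr0l.
rewrite !Hc_perp ?perp //.
exact: (Gm_zero Asym Hopt hf1 hl lmb).
Qed.

End Main2.



Section Main3.
Variable R : realType.
Variables n' d : nat.
Local Notation n := n'.+1.
Variable A : 'M[R]_n.
Hypothesis Asym : A^T = A.
Hypothesis A01 : forall i j, A i j = 0 \/ A i j = 1.
Variable H : 'M[R]_(n, d).
Hypothesis Hopt : forall O : 'M[R]_n, O^T *m O = 1%:M -> energy A H <= energy A (O *m H).

Local Notation L := (Lap A).
Local Notation C := (cov H).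
Local Notation e := (ee R n').

Variable f : 'I_n -> 'rV[R]_n.
Hypothesis hf : onb f.
Hypothesis f0 : f ord0 = e.
Variables lam mu : 'I_n -> R.
Hypothesis hl : forall m, f m *m L = lam m *: f m.
Hypothesis hm : forall m, f m *m C = mu m *: f m.

Lemma perp m : m != ord0 -> dotr (f m) e = 0.
Proof. by move=> m0; rewrite -f0 hf (negbTE m0). Qed.

Lemma mu_def m : mu m = dotr (f m *m centered H) (f m *m centered H).
Proof. by rewrite -dotr_cov hm dotrZl hf eqxx mulr1. Qed.

Lemma mu_ge0 m : 0 <= mu m.
Proof. by rewrite mu_def dotr_ge0. Qed.

Lemma mu0 : mu ord0 = 0.
Proof. by rewrite mu_def f0 ee_Hc dotr0l. Qed.

Lemma lam0 : lam ord0 = 0.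
Proof.
have := hl ord0; rewrite f0 (ee_Lap Asym) => /(congr1 (fun v => dotr v e)).
by rewrite dotr0l dotrZl ee_unit mulr1.
Qed.

Lemma energy_ge0 k (X : 'M[R]_(n, k)) : 0 <= energy A X.
Proof.
apply: sumr_ge0 => i _; apply: sumr_ge0 => j _; apply: mulr_ge0.
  by case: (A01 i j) => ->; rewrite ?lexx ?ler01.
by apply: sumr_ge0 => l _; rewrite sqr_ge0.
Qed.

Lemma dotr_scal (x : R) : dotr (x%:M : 'M[R]_1) (x%:M) = x ^+ 2.
Proof. by rewrite /dotr mxE big_ord1 !mxE eqxx mulr1n expr2. Qed.

Lemma outer_scal k (v w : 'rV[R]_k) : v *m w^T = (dotr v w)%:M.
Proof. by rewrite [LHS]mx11_scalar. Qed.

Lemma energy_vec m : energy A (f m)^T = 2 * lam m.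
Proof.
rewrite (energy_onb Asym _ hf hl); congr (_ * _).
rewrite (bigD1 m) //= big1 ?addr0.
  by rewrite outer_scal dotr_scal hf eqxx expr1n mulr1.
by move=> k km; rewrite outer_scal dotr_scal hf (negbTE km) expr0n /= mulr0.
Qed.

Lemma lam_ge0 m : 0 <= lam m.
Proof.
have := energy_ge0 (f m)^T; rewrite energy_vec; lra.
Qed.

Lemma Gm_mu i : i != ord0 -> Gm f H i i = mu i.
Proof. by move=> i0; rewrite mu_def /Gm Hc_perp // perp. Qed.

Lemma swap i j : i != ord0 -> j != ord0 -> lam i < lam j -> mu j <= mu i.
Proof.
move=> i0 j0 lij.
have ij : i != j by apply: contraTneq lij => ->; rewrite ltxx.
have cs : (0 : R) ^+ 2 + 1 ^+ 2 = 1 by rewrite expr0n expr1n add0r.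
have := rot_nonneg Asym Hopt hf hl ij cs.
rewrite !Gm_mu // expr1n mul1r !(mulr0, mul0r) subr0 pmulr_rge0; last by lra.
lra.
Qed.


Definition key1 (m : 'I_n) : R := if m == ord0 then -1 else lam m.
Definition rr : rel 'I_n :=
  fun a b => (key1 a < key1 b) || ((key1 a == key1 b) && (mu b <= mu a)).

Lemma rr_total : total rr.
Proof.
move=> a b; rewrite /rr; case: ltgtP => //= _; exact: le_total.
Qed.

Lemma rr_trans : transitive rr.
Proof.
move=> y x z; rewrite /rr => /orP [h1 | /andP [/eqP h1 h1']] /orP [h2 | /andP [/eqP h2 h2']].
- by rewrite (lt_trans h1 h2).
- by rewrite -h2 h1.
- by rewrite h1 h2.
- by rewrite h1 h2 eqxx (le_trans h2' h1') orbT.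
Qed.

Lemma rr_refl : reflexive rr.
Proof. by move=> a; rewrite /rr eqxx lexx orbT. Qed.

Variable p : {perm 'I_n}.
Hypothesis hp : forall a b : 'I_n, (a <= b)%N -> rr (p a) (p b).

Lemma p0 : p ord0 = ord0.
Proof.
have pa : p ((p^-1)%g ord0) = ord0 by rewrite permKV.
case: (eqVneq ((p^-1)%g ord0) ord0) => [a0|a0]; first by rewrite -{1}a0 pa.
case: (eqVneq (p ord0) ord0) => // pz.
have := @hp ord0 ((p^-1)%g ord0) (leq0n _); rewrite pa /rr /key1 eqxx (negbTE pz).
have := lam_ge0 (p ord0).
move: (lam (p ord0)) => x h /orP [h1 | /andP [/eqP h1 _]].
  by move: (le_lt_trans h h1); rewrite oppr_gt0 ltr10.
by move: h; rewrite h1 oppr_ge0 ler10.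
Qed.

Lemma pne0 (a : 'I_n) : a != ord0 -> p a != ord0.
Proof. by move=> a0; rewrite -p0 (inj_eq perm_inj). Qed.

Lemma mono (a b : 'I_n) : (a <= b)%N -> a != ord0 -> lam (p a) <= lam (p b) /\ mu (p b) <= mu (p a).
Proof.
move=> ab a0.
have b0 : b != ord0.
  apply/eqP => b0; move: ab a0; rewrite b0 leqn0 => /eqP h; apply/negP; rewrite negbK.
  by apply/eqP/val_inj.
have pa0 := pne0 a0; have pb0 := pne0 b0.
have := hp ab; rewrite /rr /key1 (negbTE pa0) (negbTE pb0) => /orP [h | /andP [/eqP h h']].
  by split; [exact: ltW | exact: swap].
by rewrite h lexx.
Qed.

Lemma lam_mono (a b : 'I_n) : (a <= b)%N -> lam (p a) <= lam (p b).
Proof.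
move=> ab; case: (eqVneq a ord0) => [->|a0]; first by rewrite p0 lam0 lam_ge0.
exact: (mono ab a0).1.
Qed.


Definition zz (k : nat) : 'cV[R]_n := (f (p (inord k.-1)))^T.

Lemma zz_unit k : unit_vec (zz k).
Proof. by rewrite /unit_vec /zz trmxK outer_scal hf eqxx. Qed.

Lemma scal0 : ((0 : R)%:M : 'M[R]_1) = 0.
Proof. by apply/matrixP => a b; rewrite !mxE mul0rn. Qed.

Lemma zz_orth j k : (j.-1 < n)%N -> (k.-1 < n)%N -> j.-1 != k.-1 -> orth (zz j) (zz k).
Proof.
move=> jn kn jk; rewrite /orth /zz trmxK outer_scal hf (inj_eq perm_inj).
have -> : (inord j.-1 == inord k.-1 :> 'I_n) = false.
  apply/negbTE; apply: contra jk => /eqP /(congr1 (@nat_of_ord _)); rewrite !inordK // => ->.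
  by [].
exact: scal0.
Qed.

Lemma c_def (y : 'cV[R]_n) m : dotr (f m *m y) (f m *m y) = ((f m *m y) 0 0) ^+ 2.
Proof. by rewrite {1 2}[f m *m y]mx11_scalar dotr_scal. Qed.

Lemma parseval_y (y : 'cV[R]_n) : unit_vec y -> \sum_m ((f m *m y) 0 0) ^+ 2 = 1.
Proof.
move=> hy; have := onb_parseval y^T hf.
have -> : dotr y^T y^T = 1 by rewrite /dotr trmxK hy mxE.
move=> ->; apply: eq_bigr => m _; congr (_ ^+ 2).
by rewrite /dotr -trmx_mul !mxE.
Qed.

Lemma energy_min : energy_minimizers A zz.
Proof.
move=> k /andP [k1 kn]; split.
- exact: zz_unit.
- move=> j /andP [j1 jk]; apply: zz_orth; lia.
- move=> y hy horth.
  set a : 'I_n := inord k.-1.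
  have va : nat_of_ord a = k.-1 by rewrite inordK //; lia.
  rewrite /zz -/a energy_vec (energy_onb Asym _ hf hl).
  apply: ler_wpM2l => //.
  under eq_bigr do rewrite c_def.
  rewrite (reindex_inj (@perm_inj _ p)) /=.
  have h1 : \sum_b ((f (p b) *m y) 0 0) ^+ 2 = 1.
    by rewrite -(parseval_y hy) [RHS](reindex_inj (@perm_inj _ p)).
  rewrite -[X in X <= _]mulr1 -h1 mulr_sumr; apply: ler_sum => b _.
  case: (ltnP b a) => ba.
    have : orth (zz b.+1) y by apply: horth; apply/andP; split; lia.
    rewrite /orth /zz /= inord_val trmxK => hz.
    by rewrite hz mxE expr0n /= !mulr0.
  by apply: ler_wpM2r; [exact: sqr_ge0 | exact: lam_mono].
Qed.

Definition sg (c : 'I_n) : 'I_n := inord (if (c.+1 < n)%N then c.+1 else 0%N).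

Lemma sg_val c : nat_of_ord (sg c) = if (c.+1 < n)%N then c.+1 else 0%N.
Proof. by rewrite /sg inordK //; case: ifP. Qed.

Lemma sg_inj : injective sg.
Proof.
move=> a b /(congr1 (@nat_of_ord _)); rewrite !sg_val => h; apply: val_inj => /=.
have ha := ltn_ord a; have hb := ltn_ord b.
move: h; case: ifP => ha'; case: ifP => hb'; lia.
Qed.

Definition UU : 'M[R]_n := \matrix_(r, c) f (p (sg c)) 0 r.
Definition dv : 'rV[R]_n := \row_c mu (p (sg c)).

Lemma UU_orth : UU^T *m UU = 1%:M.
Proof.
apply/matrixP => a b; rewrite !mxE.
rewrite -[a == b](inj_eq sg_inj) -[sg a == sg b](inj_eq (@perm_inj _ p)) -hf /dotr mxE; apply: eq_bigr => r _.
by rewrite !mxE.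
Qed.

Lemma CU_gen (M : 'M[R]_n) : M^T = M -> (forall m, f m *m M = mu m *: f m) ->
  M *m UU = UU *m diag_mx dv.
Proof.
move=> Ms hM; rewrite mul_mx_diag; apply/matrixP => r c; rewrite !mxE.
set x := p (sg c).
have := congr1 (fun v : 'rV[R]_n => v 0 r) (hM x); rewrite !mxE => e1.
rewrite mulrC -e1; apply: eq_bigr => k _; rewrite !mxE mulrC.
by have := congr1 (fun M : 'M[R]_n => M k r) Ms; rewrite mxE => ->.
Qed.

Lemma CU : C *m UU = UU *m diag_mx dv.
Proof. exact: CU_gen (cov_sym H) hm. Qed.

Lemma C_decomp : C = UU *m diag_mx dv *m UU^T.
Proof. by rewrite -CU -mulmxA (mulmx1C UU_orth) mulmx1. Qed.

Lemma dv_sorted (i j : 'I_n) : (i <= j)%N -> dv 0 j <= dv 0 i.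
Proof.
move=> ij; rewrite !mxE; case: (ltnP j.+1 n) => hj.
  have hi : (i.+1 < n)%N by apply: leq_ltn_trans hj.
  have si0 : sg i != ord0 by apply/eqP => /(congr1 (@nat_of_ord _)); rewrite sg_val hi.
  apply: (mono _ si0).2; by rewrite !sg_val hi hj.
have -> : sg j = ord0 by apply: val_inj; rewrite /= sg_val ltnNge hj.
by rewrite p0 mu0 mu_ge0.
Qed.

Lemma principal k : (1 <= k < n)%N -> principal_component H k (zz k.+1).
Proof.
move=> /andP [k1 kn]; split; first exact: zz_unit.
exists (mu (p (inord k))); split.
- exists UU, dv; split.
  + exact: UU_orth.
  + exact: C_decomp.
  + exact: dv_sorted.
  + have hk1 : (k.-1 < n)%N by lia.
    exists (inord k.-1); split; first by rewrite /= inordK.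
    split => //; rewrite mxE; congr (mu (p _)); apply: val_inj.
    rewrite /= sg_val (inordK hk1).
    have -> : (k.-1.+1 = k)%N by lia.
    by rewrite kn inordK.
- by rewrite /zz /= -[C]cov_sym -trmx_mul hm linearZ.
Qed.

End Main3.


Unset Implicit Arguments.


Theorem theorem2 (R : realType) (n d s : nat) (A : 'M[R]_n) (eps : nat -> R)
    (H : 'M[R]_(n, d)) :
  is_adjacency A ->
  (1 <= d)%N ->
  (s <= (minn n d).-1)%N ->
  (forall i j, (1 <= i)%N -> (i < j)%N -> (j <= s)%N -> eps j < eps i) ->
  (forall k, (1 <= k <= s)%N -> 0 < eps k) ->
  feasible s eps H ->
  (forall X : 'M[R]_(n, d), feasible s eps X -> energy A H <= energy A X) ->
  exists z : nat -> 'cV[R]_n,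
    energy_minimizers A z /\
    forall k, (1 <= k <= s)%N -> principal_component H k (z k.+1).
Proof.
move=> [Asym A01] d1 sle _ _ feasH opt.
case: n A H Asym A01 sle feasH opt => [|n'] A H Asym A01 sle feasH opt.
  exists (fun _ => 0); split.
    by move=> k /andP [k1 k0]; exfalso; lia.
  move=> k /andP [k1 ks]; exfalso; move: sle; rewrite /minn; case: ifP => h; [lia | by rewrite d1 in h].
have Hopt : forall O : 'M[R]_n'.+1, O^T *m O = 1%:M -> energy A H <= energy A (O *m H).
  by move=> O hO; apply: opt; apply: feasible_rot.
have [f [hf f0 hfl]] := get_basis Asym (cov_sym H) (cov_comm Asym Hopt) (ee_cov H).
set lam := fun m => dotr (f m *m Lap A) (f m).
set mu := fun m => dotr (f m *m cov H) (f m).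
have hl : forall m, f m *m Lap A = lam m *: f m by move=> m; rewrite /lam -(hfl m).1.
have hm : forall m, f m *m cov H = mu m *: f m by move=> m; rewrite /mu -(hfl m).2.
have [p hp] := sort_perm (rr_total lam mu) (@rr_trans _ _ lam mu) (rr_refl lam mu).
exists (zz f p); split.
  exact: (energy_min Asym A01 Hopt hf f0 hl hm hp).
move=> k /andP [k1 ks]; apply: (principal Asym A01 Hopt hf f0 hl hm hp).
by apply/andP; split => //; move: sle; rewrite /minn; case: ifP => h; lia.
Qed.
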